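(* Let $k\ge1$ be an integer and write $[k+]=\{1,2,\ldots,k\}$. Then $d(A)\le d([k+])$ for every nonempty set $A\subseteq\{0,1,\ldots,k\}$, and if $k\notin\{1,3\}$ then equality holds only for $A=[k+]$. Equivalently, in base $2$ lunar arithmetic, among all $k$-digit numbers $n$ (i.e. $2^{k-1}\le n<2^k$), the maximal value of $d_2(n)$ occurs at $n=2^k-2$ (binary $11\ldots10$), and this is the unique maximum when $k\notin\{2,4\}$.
   Context: $\mathbb{N}=\{0,1,2,\ldots\}$. For $A,B\subseteq\mathbb{N}$, $A+B=\{a+b:a\in A,b\in B\}$. For a nonempty finite $C\subseteq\mathbb{N}$, $B\subseteq\mathbb{N}$ is a divisor of $C$ if $B+D=C$ for some $D\subseteq\mathbb{N}$, and $d(C)$ is the number of divisors of $C$. Base-$b$ lunar arithmetic ($b\ge2$): for numbers with base-$b$ digits $x=\sum_i x_ib^i$, $y=\sum_j y_jb^j$ ($0\le x_i,y_j\le b-1$), the lunar product is $x\otimes y=\sum_n\big(\max_{i+j=n}\min(x_i,y_j)\big)b^n$. For a positive integer $n$, $d_b(n)$ is the number of positive integers $m$ such that $m\otimes q=n$ for some integer $q$ (the lunar divisors of $n$). *)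

(* Defs.v *)
From mathcomp Require Import all_boot all_order.
Set Implicit Arguments. Unset Strict Implicit. Unset Printing Implicit Defensive.

(* Finite subsets of N contained in {0,...,n-1} are represented as
   {set 'I_n}.  [sumset_eq B D C] says that B + D = C in N, i.e. every
   sum b + d (b in B, d in D) lies below n (so that the sumset can be
   compared inside 'I_n) and the set of these sums is exactly C. *)
Definition sumset_eq (n : nat) (B D C : {set 'I_n}) : bool :=
  [forall b in B, forall d in D, b + d < n] &&
  [forall c : 'I_n,
     (c \in C) == [exists b in B, exists d in D, (b + d)%N == c :> nat]].

(* If C is a nonempty subset of
   {0,..,n-1} and B + D = C with B, D subsets of N, then B and D are
   automatically subsets of {0,..,n-1}; hence counting B among the
   subsets of 'I_n counts all divisors of C in N. *)
Definition ndiv (n : nat) (C : {set 'I_n}) : nat :=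
  #|[set B : {set 'I_n} | [exists D : {set 'I_n}, sumset_eq B D C]]|.

Definition kplus (k : nat) : {set 'I_k.+1} := [set i : 'I_k.+1 | 0 < i].

Definition ldigit (b x i : nat) : nat := x %/ b ^ i %% b.

(* Lunar product.  For b >= 2 every nonzero digit of x sits at a
   position i < x (and likewise for y), so all nonzero digits of the
   product sit at positions t < x + y. *)
Definition lunar_mul (b x y : nat) : nat :=
  \sum_(t < x + y)
     (\max_(i < t.+1) minn (ldigit b x i) (ldigit b y (t - i))) * b ^ t.

(* For n >= 1
   (and b >= 2) any such m and q have at most as many digits as n, hence
   are < b ^ n; so the bounded search below counts all lunar divisors. *)
Definition lunar_ndiv (b n : nat) : nat :=
  #|[set m : 'I_(b ^ n) |
       (0 < m) && [exists q : 'I_(b ^ n), lunar_mul b m q == n]]|.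

(* Main.v *)
Require Import Defs.
From mathcomp Require Import all_boot all_order zify.
Set Implicit Arguments. Unset Strict Implicit. Unset Printing Implicit Defensive.

Lemma ld0 x : ldigit 2 x 0 = x %% 2.
Proof. by rewrite /ldigit expn0 divn1. Qed.

Lemma ldS x i : ldigit 2 x i.+1 = ldigit 2 (x %/ 2) i.
Proof. by rewrite /ldigit expnS divnMA. Qed.

Lemma ld_lt2 x i : ldigit 2 x i < 2.
Proof. by rewrite /ldigit ltn_pmod. Qed.

Lemma ld_cons (c s i : nat) : c < 2 ->
  ldigit 2 (c + 2 * s) i = if i is j.+1 then ldigit 2 s j else c.
Proof.
move=> hc; case: i => [|j].
  by rewrite ld0 addnC mulnC modnMDl modn_small.
by rewrite ldS addnC mulnC divnMDl // divn_small // addn0.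
Qed.

Lemma ld_ext_aux N : forall x y, x + y < N -> (forall i, ldigit 2 x i = ldigit 2 y i) -> x = y.
Proof.
elim: N => [//|N IH] x y hN h.
case: (posnP (x + y)) => hxy; first lia.
rewrite (divn_eq x 2) (divn_eq y 2).
have e0 := h 0; rewrite !ld0 in e0; rewrite e0.
congr (_ * 2 + _); apply: IH; first lia.
by move=> i; have := h i.+1; rewrite !ldS.
Qed.

Lemma ld_ext x y : (forall i, ldigit 2 x i = ldigit 2 y i) -> x = y.
Proof. by apply: (@ld_ext_aux (x + y).+1). Qed.

Lemma ld_sum (e : nat -> bool) T i :
  ldigit 2 (\sum_(t < T) e t * 2 ^ t) i = (i < T) && e i.
Proof.
elim: T e i => [|T IH] e i.
  by rewrite big_ord0 /ldigit div0n mod0n.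
rewrite big_ord_recl /=.
have -> : \sum_(t < T) e (lift ord0 t) * 2 ^ (lift ord0 t) = 2 * \sum_(t < T) e t.+1 * 2 ^ t.
  rewrite big_distrr; apply: eq_bigr => t _ /=.
  by rewrite /bump /= add1n expnS mulnCA.
rewrite expn0 muln1 ld_cons; last by case: (e 0).
by case: i => [|j] //; rewrite (IH (fun t => e t.+1)).
Qed.

Lemma sum_lt (e : nat -> bool) T : \sum_(t < T) e t * 2 ^ t < 2 ^ T.
Proof.
elim: T => [|T IH]; first by rewrite big_ord0.
rewrite big_ord_recr expnS.
have -> : \sum_(i < T) e (widen_ord (leqnSn T) i) * 2 ^ (widen_ord (leqnSn T) i) = \sum_(t < T) e t * 2 ^ t by apply: eq_bigr.
have : e T * 2 ^ T <= 2 ^ T by case: (e T); rewrite ?mul1n ?mul0n.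
rewrite /=. move: IH. set s := bigop _ _ _. set a := 2 ^ T. move=> *; lia.
Qed.

Lemma ld_pos x i : ldigit 2 x i = 1 -> 2 ^ i <= x.
Proof.
rewrite /ldigit => h; rewrite -(@divn_gt0 (2 ^ i)) ?expn_gt0 //.
by case: (x %/ 2 ^ i) h.
Qed.

Lemma ld_big x T i : x < 2 ^ T -> T <= i -> ldigit 2 x i = 0.
Proof.
move=> h1 h2; rewrite /ldigit divn_small //.
apply: leq_trans h1 _; by rewrite leq_exp2l.
Qed.

Lemma max01 m (F : 'I_m -> nat) : (forall i, F i < 2) ->
  \max_(i < m) F i = [exists i, F i == 1].
Proof.
move=> hF; case: existsP => [[i /eqP hi]|hn] /=.
  apply/eqP; rewrite eqn_leq; apply/andP; split.
    by apply/bigmax_leqP => j _; have := hF j; lia.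
  by rewrite -hi; apply: (@leq_bigmax_cond _ predT).
apply/eqP; rewrite -leqn0; apply/bigmax_leqP => j _.
have := hF j; have : F j != 1 by apply/negP => /eqP e; apply: hn; exists j; rewrite e.
lia.
Qed.

Definition EE x y t := [exists i : 'I_t.+1, (ldigit 2 x i == 1) && (ldigit 2 y (t - i) == 1)].

Lemma minn01 a b : a < 2 -> b < 2 -> (minn a b == 1) = (a == 1) && (b == 1).
Proof. by case: a => [|[|a]] // _; case: b => [|[|b]]. Qed.

Lemma lunar_eq x y : lunar_mul 2 x y = \sum_(t < x + y) EE x y t * 2 ^ t.
Proof.
rewrite /lunar_mul; apply: eq_bigr => t _; congr (_ * _).
rewrite max01; last by move=> i; apply: leq_ltn_trans (geq_minl _ _) (ld_lt2 _ _).
congr (nat_of_bool _); apply: eq_existsb => i.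
by rewrite minn01 // ld_lt2.
Qed.

Lemma lunar_bit x y t : ldigit 2 (lunar_mul 2 x y) t = EE x y t.
Proof.
rewrite lunar_eq ld_sum; case hE: (EE x y t); rewrite ?andbF ?andbT //=.
case/existsP: hE => i /andP [/eqP h1 /eqP h2].
have := ld_pos h1; have := ld_pos h2.
have := ltn_expl i (isT : 1 < 2); have := ltn_expl (t - i) (isT : 1 < 2).
have := ltn_ord i; lia.
Qed.

Section Arith.
Variables (p : nat -> nat) (k : nat).
Hypotheses (hk : 1 <= k) (p0 : p 0 <= 1) (ppos : forall L, 0 < p L)
  (pinc : forall L, L < k -> p L < p L.+1)
  (pbeta : forall L, L < k -> p L.+1 <= 2 * p L)
  (pbetaS : forall L, 0 < L -> L < k -> p L.+1 < 2 * p L)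
  (pgam : forall L, L.+2 <= k -> p L.+1 + p L <= p L.+2).

Lemma pmono i d : i + d <= k -> p i + d <= p (i + d).
Proof.
elim: d => [|d IH] h; first by rewrite !addn0.
have := IH ltac:(lia); have := pinc (L:=i + d) ltac:(lia).
rewrite !addnS; lia.
Qed.

Lemma pmono' i j : i <= j <= k -> p i + (j - i) <= p j.
Proof. move=> h; have := @pmono i (j - i) ltac:(lia); have -> : i + (j - i) = j by lia. done. Qed.

Lemma r32 i : i < k -> 3 * p i <= 2 * p i.+1 /\ (i != 1 -> 3 * p i < 2 * p i.+1).
Proof.
move=> hi; case: i hi => [|i] hi.
  have := ppos 0; have := pinc (L:=0) hi; lia.
have g := pgam (L:=i) ltac:(lia); have b := pbeta (L:=i) ltac:(lia).
split; first lia.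
move=> hi1; have := pbetaS (L:=i) ltac:(lia) ltac:(lia); lia.
Qed.

Lemma qm m : 1 <= m -> forall j, j + m <= k ->
  m.+1 * p j <= 2 * p (j + m).-1 /\ (2 <= m -> (m, j) != (2, 1) -> m.+1 * p j < 2 * p (j + m).-1).
Proof.
elim: m => [//|m IH] hm j hj.
case: (posnP m) => hm0.
  subst m; rewrite addn1 /=; split; first lia.
  lia.
have [IH1 _] := IH hm0 j ltac:(lia).
have [r1 r2] := r32 (i := (j + m).-1) ltac:(lia).
have e : (j + m).-1.+1 = (j + m.+1).-1 by lia.
rewrite e in r1 r2.
case: (eqVneq m 1) => hm1.
  subst m; split; first lia.
  move=> _ hne; apply: leq_trans (r2 _); first lia.
  apply/eqP => e'; move: hne; have -> : j = 1 by lia. by [].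
have hb := ppos (j + m).-1.
split; first nia.
move=> _ _; nia.
Qed.

Lemma arith m M : m <= M <= k ->
  m.+1 * p (M - m) <= 2 * p k.-1 /\
  (m.+1 * p (M - m) = 2 * p k.-1 -> (m = 1 /\ M = k) \/ k = 1 \/ k = 3).
Proof.
move=> hmM.
case: (posnP m) => hm.
  subst m; rewrite subn0 mul1n.
  have h1 := @pmono' M k ltac:(lia).
  have h2 := pbeta (L:=k.-1) ltac:(lia).
  have e : k.-1.+1 = k by lia.
  rewrite e in h2.
  split; first lia.
  move=> eq; right; left.
  case: (posnP k.-1) => hk1; first lia.
  have := pbetaS hk1 ltac:(lia); rewrite e; lia.
have h1 := @pmono' (M - m) (k - m) ltac:(lia).
have [q1 q2] := qm hm (j := k - m) ltac:(lia).
have e : (k - m + m).-1 = k.-1 by lia.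
rewrite e in q1 q2.
split; first nia.
move=> eq.
have hMk : M = k.
  apply/eqP; apply/negPn/negP => hne.
  have : p (M - m) < p (k - m) by lia.
  move=> hlt; have : m.+1 * p (M - m) < m.+1 * p (k - m) by rewrite ltn_pmul2l.
  lia.
subst M.
case: (eqVneq m 1) => hm1; first by left.
right; right.
case: (leqP 2 m) => hm2; last lia.
case: (eqVneq (m, k - m) (2, 1)) => hp.
  case: hp => -> e2; lia.
have := q2 hm2 hp; lia.
Qed.

End Arith.

Section SetPart.
Variable n : nat.
Local Notation U := 'I_n.+1.

Definition inb (B : {set U}) (x : nat) : bool := (x < n.+1) && (inord x \in B).

Lemma inbE (B : {set U}) (y : U) : inb B y = (y \in B).
Proof. by rewrite /inb ltn_ord inord_val. Qed.

Lemma inb_le (B : {set U}) x : inb B x -> x <= n.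
Proof. by case/andP. Qed.

Lemma inbP (B : {set U}) x : reflect (exists2 y : U, y \in B & val y = x) (inb B x).
Proof.
apply: (iffP idP).
  case/andP=> h1 h2; exists (inord x); [exact: h2 | exact: inordK].
by case=> y hy <-; rewrite inbE.
Qed.

Definition mk (p : pred nat) : {set U} := [set x : U | p x].

Lemma inb_mk p x : inb (mk p) x = (x < n.+1) && p x.
Proof. rewrite /inb inE; case: ltnP => //= h; by rewrite inordK. Qed.

Lemma in_mk p (x : U) : (x \in mk p) = p x.
Proof. by rewrite inE. Qed.

Definition mx (B : {set U}) : nat := \max_(i in B) (val i).
Definition mn (B : {set U}) : nat := n - \max_(i in B) (n - val i).

Lemma mx_ge (B : {set U}) (i : U) : i \in B -> i <= mx B.
Proof. move=> h; rewrite /mx; exact: (@leq_bigmax_cond _ (fun j => j \in B) (fun j : U => val j) i h). Qed.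

Lemma mx_le (B : {set U}) c : (forall i : U, i \in B -> i <= c) -> mx B <= c.
Proof. move=> h; apply/bigmax_leqP => i; exact: h. Qed.

Lemma mx_len (B : {set U}) : mx B <= n.
Proof. apply: mx_le => i _; by rewrite -ltnS. Qed.

Lemma mx_in (B : {set U}) : B != set0 -> exists2 i : U, i \in B & val i = mx B.
Proof.
move=> h; have h0 : 0 < #|B| by rewrite lt0n cards_eq0.
case: (eq_bigmax_cond (fun i : U => val i) h0) => i hi e; exists i => //.
Qed.

Lemma mn_le (B : {set U}) (i : U) : i \in B -> mn B <= i.
Proof.
move=> h; have := @leq_bigmax_cond _ (fun j => j \in B) (fun j : U => n - val j) i h.
rewrite /mn; set M := bigop _ _ _; have := ltn_ord i; rewrite /=; lia.
Qed.

Lemma mn_in (B : {set U}) : B != set0 -> exists2 i : U, i \in B & val i = mn B.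
Proof.
move=> h; have h0 : 0 < #|B| by rewrite lt0n cards_eq0.
case: (eq_bigmax_cond (fun i : U => n - val i) h0) => i hi e; exists i => //;
rewrite /mn e /=; have := ltn_ord i; lia.
Qed.

Lemma mx_char (B : {set U}) a : (forall i : U, i \in B -> i <= a) -> inb B a -> mx B = a.
Proof.
move=> h /inbP [y hy ey]; apply/eqP; rewrite eqn_leq -ey mx_ge // andbT.
apply: mx_le => i hi; rewrite ey; exact: h.
Qed.

Lemma mn_char (B : {set U}) a : (forall i : U, i \in B -> a <= i) -> inb B a -> mn B = a.
Proof.
move=> h /inbP [y hy ey]; apply/eqP; rewrite eqn_leq -ey mn_le //=.
have hB : B != set0 by apply/set0Pn; exists y.
by case: (mn_in hB) => z hz <-; rewrite ey; apply: h.
Qed.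

Lemma sumset_intro (B D C : {set U}) :
  (forall b d : U, b \in B -> d \in D -> inb C (b + d)) ->
  (forall c : U, c \in C -> exists b : U, exists d : U, [/\ b \in B, d \in D & b + d = c]) ->
  sumset_eq B D C.
Proof.
move=> h1 h2; apply/andP; split.
  apply/forallP => b; apply/implyP => hb; apply/forallP => d; apply/implyP => hd.
  by case/andP: (h1 b d hb hd).
apply/forallP => c; apply/eqP; apply/idP/idP.
  move=> hc; case: (h2 c hc) => b [d [hb hd e]].
  apply/existsP; exists b; rewrite hb /=; apply/existsP; exists d; by rewrite hd e /=.
case/existsP => b /andP [hb /existsP [d /andP [hd /eqP e]]].
by rewrite -inbE -e h1.
Qed.

Lemma sumset_sum (B D C : {set U}) (b d : U) : sumset_eq B D C -> b \in B -> d \in D -> inb C (b + d).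
Proof.
case/andP => /forallP h1 /forallP h2 hb hd.
have hlt : b + d < n.+1 by have := h1 b; rewrite hb /= => /forallP /(_ d); rewrite hd.
move: (h2 (inord (b + d))) => /eqP e.
rewrite /inb hlt e /=; apply/existsP; exists b; rewrite hb /=; apply/existsP; exists d.
by rewrite hd /= inordK.
Qed.

Lemma sumset_dec (B D C : {set U}) (c : U) : sumset_eq B D C -> c \in C ->
  exists b : U, exists d : U, [/\ b \in B, d \in D & b + d = c].
Proof.
case/andP => _ /forallP h2 hc; move: (h2 c) => /eqP e; move: hc; rewrite e.
case/existsP => b /andP [hb /existsP [d /andP [hd /eqP e']]].
by exists b, d.
Qed.

Definition isdiv (C B : {set U}) : bool := [exists D, sumset_eq B D C].

Lemma ndivE (C : {set U}) : ndiv C = #|[set B | isdiv C B]|.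
Proof. by []. Qed.


Ltac li := simpl in *; lia.

Definition itv (a b : nat) : {set U} := mk (fun x => a <= x <= b).

Lemma in_itv a b (x : U) : (x \in itv a b) = (a <= x <= b).
Proof. exact: in_mk. Qed.

Lemma ord_of (x : nat) : x <= n -> exists y : U, val y = x.
Proof. by move=> h; exists (inord x); apply: inordK. Qed.

Lemma div_facts (A B D : {set U}) : A != set0 -> sumset_eq B D A ->
  [/\ B != set0, mn B <= mn A, inb D (mn A - mn B),
      (forall d : U, d \in D -> mn A - mn B <= d /\ mx B + d <= mx A) &
      (forall b d : U, b \in B -> d \in D -> inb A (b + d))].
Proof.
move=> hA hs.
have hsum : forall b d : U, b \in B -> d \in D -> inb A (b + d).
  by move=> b d hb hd; exact: (sumset_sum hs hb hd).
case: (mn_in hA) => a ha ea.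
case: (sumset_dec hs ha) => b0 [d0 [hb0 hd0 e0]].
have hB : B != set0 by apply/set0Pn; exists b0.
case: (mn_in hB) => bm hbm ebm.
case: (mx_in hB) => bM hbM ebM.
have key: forall d : U, d \in D -> mn A - mn B <= d /\ mx B + d <= mx A.
  move=> d hd; have h1 := hsum _ _ hbm hd; have h2 := hsum _ _ hbM hd.
  case/inbP: h1 => y1 hy1 e1; case/inbP: h2 => y2 hy2 e2.
  have := mn_le hy1; have := mx_ge hy2; li.
have le1 : mn B <= mn A by have := mn_le hb0; li.
split => //.
have := key _ hd0; have := mn_le hb0 => h1 [h2 _].
apply/inbP; exists d0 => //; li.
Qed.

Definition phi (A B : {set U}) : {set U} :=
  mk (fun x => inb B x || ((mn B <= x <= mx B) && ~~ inb A (x + (mn A - mn B)))).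

Lemma inB_bounds (B : {set U}) x : inb B x -> mn B <= x <= mx B.
Proof. by case/inbP => y hy <-; rewrite mn_le // mx_ge. Qed.

Lemma phi_bounds A B : B != set0 -> mn (phi A B) = mn B /\ mx (phi A B) = mx B.
Proof.
move=> hB.
have hb : forall i : U, i \in phi A B -> mn B <= i <= mx B.
  move=> i; rewrite in_mk; case/orP; first exact: inB_bounds.
  by case/andP.
case: (mn_in hB) => bm hbm ebm; case: (mx_in hB) => bM hbM ebM.
split.
  apply: mn_char; first by move=> i /hb /andP [].
  apply/inbP; exists bm => //; by rewrite in_mk inbE hbm.
apply: mx_char; first by move=> i /hb /andP [].
apply/inbP; exists bM => //; by rewrite in_mk inbE hbM.
Qed.

Lemma phi_div A B : A != set0 -> isdiv A B -> isdiv (itv (mn A) (mx A)) (phi A B).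
Proof.
move=> hA /existsP [D hs].
case: (div_facts hA hs) => hB le1 /inbP [dt hdt edt] key hsum.
case: (mn_in hB) => bm hbm ebm; case: (mx_in hB) => bM hbM ebM.
have kt := key _ hdt.
have hMn := mx_len A.
apply/existsP; exists (itv (mn A - mn B) (mx A - mx B)); apply: sumset_intro.
  move=> b d; rewrite in_mk in_itv => hb hd.
  have : mn B <= b <= mx B by case/orP: hb => [/inB_bounds|/andP []].
  rewrite inb_mk; li.
move=> c; rewrite in_itv => hc.
case: (leqP (mx B) (c - (mn A - mn B))) => h1.
  have [d ed] : exists d : U, val d = c - mx B by apply: ord_of; li.
  exists bM, d; split.
  - by rewrite in_mk inbE hbM.
  - rewrite in_itv; li.
  - li.
case hAc: (inb A c).
  case/inbP: hAc => c' hc' ec'.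
  case: (sumset_dec hs hc') => y [d [hy hd e]].
  have := key _ hd; have := mn_le hy => h2 h3.
  exists y, d; split.
  - by rewrite in_mk inbE hy.
  - rewrite in_itv; li.
  - li.
have [b eb] : exists b : U, val b = c - (mn A - mn B) by apply: ord_of; li.
exists b, dt; split.
- rewrite in_mk; apply/orP; right.
  have -> : b + (mn A - mn B) = c by li.
  rewrite hAc andbT; li.
- rewrite in_itv; li.
- li.
Qed.

Lemma phi_rec A B (x : U) : A != set0 -> isdiv A B ->
  (x \in B) = (x \in phi A B) && inb A (x + (mn A - mn B)).
Proof.
move=> hA /existsP [D hs].
case: (div_facts hA hs) => hB le1 /inbP [dt hdt edt] key hsum.
apply/idP/idP.
  move=> hx; rewrite in_mk inbE hx /=.
  by have := hsum _ _ hx hdt; rewrite edt.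
rewrite in_mk inbE; case/andP => /orP [//|/andP [_ h]] h'.
by rewrite h' in h.
Qed.

Lemma phi_inj A B1 B2 : A != set0 -> isdiv A B1 -> isdiv A B2 ->
  phi A B1 = phi A B2 -> B1 = B2.
Proof.
move=> hA h1 h2 e.
have hB1 : B1 != set0 by case/existsP: h1 => D hs; case: (div_facts hA hs).
have hB2 : B2 != set0 by case/existsP: h2 => D hs; case: (div_facts hA hs).
have [e1 _] := phi_bounds A hB1; have [e2 _] := phi_bounds A hB2.
have emn : mn B1 = mn B2 by rewrite -e1 -e2 e.
apply/setP => x; rewrite (phi_rec x hA h1) (phi_rec x hA h2) e emn //.
Qed.

Lemma sub_itv (A : {set U}) : A \subset itv (mn A) (mx A).
Proof. apply/subsetP => x hx; by rewrite in_itv mn_le // mx_ge. Qed.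

Lemma red_le A : A != set0 -> ndiv A <= ndiv (itv (mn A) (mx A)).
Proof.
move=> hA; rewrite !ndivE.
rewrite -(@card_in_imset _ _ (phi A) [set B | isdiv A B]); last first.
  move=> B1 B2; rewrite !inE => h1 h2; exact: phi_inj.
apply: subset_leq_card; apply/subsetP => C /imsetP [B]; rewrite inE => hB ->.
by rewrite inE phi_div.
Qed.

Lemma red_lt A : A != set0 -> A != itv (mn A) (mx A) ->
  ndiv A < ndiv (itv (mn A) (mx A)).
Proof.
move=> hA hne; rewrite !ndivE.
rewrite -(@card_in_imset _ _ (phi A) [set B | isdiv A B]); last first.
  move=> B1 B2; rewrite !inE => h1 h2; exact: phi_inj.
apply: proper_card; apply/properP; split.
  apply/subsetP => C /imsetP [B]; rewrite inE => hB ->.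
  by rewrite inE phi_div.
have : ~~ (itv (mn A) (mx A) \subset A).
  apply: contra hne => h; by rewrite eqEsubset sub_itv h.
case/subsetPn => x hx hxA.
move: (hx); rewrite in_itv => /andP [hx1 hx2].
have hMn := mx_len A.
exists (itv (mn A) x).
  rewrite inE; apply/existsP; exists (itv 0 (mx A - x)); apply: sumset_intro.
    move=> b d; rewrite !in_itv inb_mk; li.
  move=> c; rewrite in_itv => hc.
  case: (leqP c x) => h.
    exists c, ord0; split; rewrite ?in_itv; li.
  exists x; have [d ed] : exists d : U, val d = c - x by apply: ord_of; li.
  exists d; split; rewrite ?in_itv; li.
apply/imsetP => [[B]]; rewrite inE => hB e.
case/existsP: (hB) => D hs.
case: (div_facts hA hs) => hB0 le1 /inbP [dt hdt edt] key hsum.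
have [e1 e2] := phi_bounds A hB0.
have emn : mn (itv (mn A) x) = mn A.
  apply: mn_char; first by move=> i; rewrite in_itv => /andP [].
  rewrite inb_mk; li.
have emx : mx (itv (mn A) x) = x.
  apply: mx_char; first by move=> i; rewrite in_itv => /andP [].
  rewrite inb_mk; li.
case: (mx_in hB0) => bM hbM ebM.
have := hsum _ _ hbM hdt.
have -> : bM + dt = x.
  rewrite edt ebM -e2 -e emx; have : mn B = mn A by rewrite -e1 -e emn.
  li.
by rewrite inbE (negbTE hxA).
Qed.

Definition cov (L : nat) (P : {set U}) : bool :=
  [&& ord0 \in P, mx P <= L &
   [forall x : U, (x <= mx P) ==> [exists y in P, (y <= x) && (x <= y + (L - mx P))]]].

Definition pc (L : nat) : nat := #|[set P | cov L P]|.

Lemma covP (L : nat) (P : {set U}) : reflect [/\ ord0 \in P, mx P <= L &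
   forall x : U, x <= mx P -> exists2 y : U, y \in P & y <= x <= y + (L - mx P)] (cov L P).
Proof.
apply: (iffP and3P) => [[h1 h2 /forallP h3]|[h1 h2 h3]]; split => //.
  move=> x hx; move: (h3 x); rewrite hx /= => /existsP [y /andP [hy hy']].
  by exists y.
apply/forallP => x; apply/implyP => hx; case: (h3 x hx) => y hy hy'.
by apply/existsP; exists y; rewrite hy.
Qed.

Definition down (B : {set U}) (s : nat) : {set U} := mk (fun x => inb B (x + s)).
Definition up (P : {set U}) (s : nat) : {set U} := mk (fun x => (s <= x) && inb P (x - s)).

Lemma itv_mnmx m M : m <= M <= n -> mn (itv m M) = m /\ mx (itv m M) = M.
Proof.
move=> h; split.
  apply: mn_char; first by move=> i; rewrite in_itv => /andP [].
  rewrite inb_mk; li.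
apply: mx_char; first by move=> i; rewrite in_itv => /andP [].
rewrite inb_mk; li.
Qed.

Lemma itv_div_a m M (B : {set U}) : m <= M <= n -> isdiv (itv m M) B ->
  [/\ B != set0, mn B <= m & cov (M - m) (down B (mn B))].
Proof.
move=> hmM /existsP [D hs].
have hJ : itv m M != set0 by apply/set0Pn; have [y ey] := @ord_of m ltac:(li); exists y; rewrite in_itv; li.
have [emn emx] := itv_mnmx hmM.
case: (div_facts hJ hs); rewrite emn emx => hB le1 /inbP [dt hdt edt] key hsum.
case: (mn_in hB) => bm hbm ebm; case: (mx_in hB) => bM hbM ebM.
have kt := key _ hdt.
have emxP : mx (down B (mn B)) = mx B - mn B.
  apply: mx_char.
    move=> i; rewrite in_mk => /inB_bounds; li.
  rewrite inb_mk -ebM; apply/andP; split; first li.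
  have -> : bM - mn B + mn B = bM by have := mn_le hbM; li.
  by rewrite inbE.
split => //; apply/covP; split.
- by rewrite in_mk /= add0n -ebm inbE.
- rewrite emxP; li.
move=> x hx; rewrite emxP in hx *.
have [c ec] : exists c : U, val c = x + m by apply: ord_of; have := mx_len B; li.
have : c \in itv m M by rewrite in_itv; li.
move=> /(sumset_dec hs) [y' [d [hy' hd e]]].
have := key _ hd; have := mn_le hy' => h1 h2.
have [y ey] : exists y : U, val y = y' - mn B by apply: ord_of; li.
exists y.
  rewrite in_mk; have -> : y + mn B = y' by li.
  by rewrite inbE.
li.
Qed.

Lemma itv_div_b m M s (P : {set U}) : m <= M <= n -> s <= m -> cov (M - m) P ->
  [/\ isdiv (itv m M) (up P s), mn (up P s) = s & down (up P s) s = P].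
Proof.
move=> hmM hs /covP [h0 hb hc].
have hP : P != set0 by apply/set0Pn; exists ord0.
case: (mx_in hP) => bP hbP ebP.
have hPle : forall x : U, x \in P -> x + s <= M by move=> x /mx_ge; li.
split.
- apply/existsP; exists (itv (m - s) (m - s + (M - m - mx P))); apply: sumset_intro.
    move=> x d; rewrite in_mk in_itv inb_mk => /andP [h1 /inbP [y hy ey]] hd.
    have := mx_ge hy; li.
  move=> c; rewrite in_itv => hc'.
  case: (leqP (mx P) (c - m)) => h1.
    have [x ex] : exists x : U, val x = bP + s by apply: ord_of; have := hPle _ hbP; li.
    have [d ed] : exists d : U, val d = c - bP - s by apply: ord_of; li.
    exists x, d; split.
    + rewrite in_mk; apply/andP; split; first li.
      have -> : x - s = bP by li.
      by rewrite inbE.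
    + rewrite in_itv; li.
    + li.
  have [z ez] : exists z : U, val z = c - m by apply: ord_of; li.
  case: (hc z ltac:(li)) => y hy hyz.
  have [x ex] : exists x : U, val x = y + s by apply: ord_of; have := hPle _ hy; li.
  have [d ed] : exists d : U, val d = c - y - s by apply: ord_of; li.
  exists x, d; split.
  + rewrite in_mk; apply/andP; split; first li.
    have -> : x - s = y by li.
    by rewrite inbE.
  + rewrite in_itv; li.
  + li.
- apply: mn_char; first by move=> i; rewrite in_mk => /andP [].
  rewrite inb_mk; apply/andP; split; first li.
  by rewrite leqnn subnn /=; apply/inbP; exists ord0.
- apply/setP => x; rewrite in_mk inb_mk.
  have -> : x + s - s = x by li.
  rewrite leq_addl /= inbE.
  case hx: (x \in P); rewrite ?andbF ?andbT //; have := hPle _ hx; li.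
Qed.

Lemma itv_div_c (B : {set U}) : B != set0 -> up (down B (mn B)) (mn B) = B.
Proof.
move=> hB; apply/setP => x; rewrite in_mk inb_mk.
case hx: (x \in B).
  rewrite mn_le //=; apply/andP; split; first by have := ltn_ord x; li.
  have -> : x - mn B + mn B = x by have := mn_le hx; li.
  by rewrite inbE.
case: (leqP (mn B) x) => //= h.
have -> : x - mn B + mn B = x by li.
by rewrite inbE hx andbF.
Qed.

Lemma itv_count m M : m <= M <= n -> ndiv (itv m M) = m.+1 * pc (M - m).
Proof.
move=> hmM; rewrite ndivE /pc.
pose f (B : {set U}) : 'I_m.+1 * {set U} := (inord (mn B), down B (mn B)).
have hD : {in [set B | isdiv (itv m M) B] &, injective f}.
  move=> B1 B2; rewrite !inE => h1 h2 [e1 e2].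
  case: (itv_div_a hmM h1) => hB1 l1 _; case: (itv_div_a hmM h2) => hB2 l2 _.
  have e : mn B1 = mn B2.
    by have := congr1 (@nat_of_ord _) e1; rewrite !inordK ?ltnS.
  by rewrite -(itv_div_c hB1) -(itv_div_c hB2) e2 e.
rewrite -(card_in_imset hD).
have -> : [set f x | x in [set B | isdiv (itv m M) B]] =
   setX [set: 'I_m.+1] [set P | cov (M - m) P].
  apply/setP => [[s P]]; rewrite !inE /=; apply/imsetP/idP.
    case=> B; rewrite inE => hB [_ ->].
    by case: (itv_div_a hmM hB).
  move=> hP; have hs : s <= m by rewrite -ltnS ltn_ord.
  case: (itv_div_b hmM hs hP) => h1 h2 h3.
  exists (up P s); first by rewrite inE.
  by rewrite /f h2 h3 inord_val.
by rewrite cardsX cardsT card_ord.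
Qed.

Lemma inb0 (P : {set U}) : ord0 \in P -> inb P 0.
Proof. by move=> h; apply/inbP; exists ord0. Qed.

Lemma mx1 : mx [set ord0 : U] = 0.
Proof.
apply: mx_char; first by move=> i /set1P ->.
by apply: inb0; rewrite set11.
Qed.

Lemma cov1 L : cov L [set ord0].
Proof.
apply/covP; rewrite mx1; split => //; first by rewrite set11.
move=> x hx; exists ord0; rewrite ?set11 //; li.
Qed.

Lemma cov_le L P (x : U) : cov L P -> x \in P -> x <= mx P <= L.
Proof. by case/covP => _ h _ hx; rewrite mx_ge. Qed.

Lemma cov0 L P : cov L P -> mx P = 0 -> P = [set ord0].
Proof.
move=> hc e; apply/setP => x; rewrite in_set1; apply/idP/eqP.
  by move=> hx; apply/val_inj => /=; have := cov_le hc hx; rewrite e; li.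
by case/covP: hc => h _ _ ->.
Qed.

Lemma covL L P : cov L P -> mx P = L -> P = itv 0 L.
Proof.
move=> hc e; apply/setP => x; rewrite in_itv /=; apply/idP/idP.
  by move=> hx; have := cov_le hc hx; li.
case/covP: hc => _ _ h3 hx.
case: (h3 x ltac:(li)) => y hy hy'.
have -> : x = y by apply/val_inj; move: hy'; rewrite e /=; li.
done.
Qed.

Lemma cov_itv L : L <= n -> cov L (itv 0 L).
Proof.
move=> hL; have [_ e] := @itv_mnmx 0 L ltac:(li).
apply/covP; split; rewrite ?e //; first by rewrite in_itv.
move=> x hx; exists x; rewrite ?in_itv; li.
Qed.

Lemma pc_pos L : 0 < pc L.
Proof. by rewrite /pc; apply/card_gt0P; exists [set ord0]; rewrite inE cov1. Qed.

Lemma pc0 : pc 0 <= 1.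
Proof.
rewrite /pc -(cards1 [set ord0 : U]); apply: subset_leq_card; apply/subsetP => P.
rewrite !inE => hc; apply/eqP; apply: (cov0 hc).
by case/covP: hc => _ h _; li.
Qed.

Lemma pc_inc L : L < n -> pc L < pc L.+1.
Proof.
move=> hL; apply: proper_card; apply/properP; split.
  apply/subsetP => P; rewrite !inE => /covP [h1 h2 h3]; apply/covP; split => //.
    li.
  move=> x hx; case: (h3 x hx) => y hy hy'; exists y => //; li.
exists (itv 0 L.+1); first by rewrite inE cov_itv.
rewrite inE; apply/negP => /covP [_ h _].
have [_ e] := @itv_mnmx 0 L.+1 ltac:(li); rewrite e in h; li.
Qed.

Definition hb (P : {set U}) : {set U} * bool :=
  if mx P == 0 then ([set ord0], false)
  else (mk (fun x => (inb P x && (x != mx P)) || (x == (mx P).-1)), inb P (mx P).-1).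

Lemma hb_mx (P : {set U}) : P != set0 -> 0 < mx P ->
  mx (mk (fun x => (inb P x && (x != mx P)) || (x == (mx P).-1))) = (mx P).-1.
Proof.
move=> hP hb; apply: mx_char.
  move=> i; rewrite in_mk => /orP [/andP [/inB_bounds h1 h2]|/eqP ->] //; li.
rewrite inb_mk eqxx orbT andbT; have := mx_len P; li.
Qed.

Lemma hb_cov L P : cov L.+1 P -> cov L (hb P).1.
Proof.
rewrite /hb; case: eqP => [_|hb0] hc /=; first exact: cov1.
have hP : P != set0 by case/covP: hc => h _ _; apply/set0Pn; exists ord0.
have hb1 : 0 < mx P by li.
case/covP: hc => h1 h2 h3.
apply/covP; rewrite hb_mx //; split.
- rewrite in_mk inb0 //=; apply/orP; left; li.
- li.
move=> x hx; case: (h3 x ltac:(li)) => y hy hy'.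
exists y.
  rewrite in_mk inbE hy /=; apply/orP; left; li.
li.
Qed.

Lemma hb_inj L : {in [set P | cov L.+1 P] &, injective hb}.
Proof.
move=> P1 P2; rewrite !inE => c1 c2.
have hP1 : P1 != set0 by case/covP: c1 => h _ _; apply/set0Pn; exists ord0.
have hP2 : P2 != set0 by case/covP: c2 => h _ _; apply/set0Pn; exists ord0.
rewrite /hb.
case: eqP => e1; case: eqP => e2.
- by rewrite (cov0 c1 e1) (cov0 c2 e2).
- case=> eQ et; have := hb_mx hP2 ltac:(li); rewrite -eQ mx1 => eb.
  move: et; have -> : (mx P2).-1 = 0 by li.
  by case/covP: c2 => h _ _; rewrite inb0.
- case=> eQ et; have := hb_mx hP1 ltac:(li); rewrite eQ mx1 => eb.
  move: et; have -> : (mx P1).-1 = 0 by li.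
  by case/covP: c1 => h _ _; rewrite inb0.
case=> eQ et.
have eb : mx P1 = mx P2.
  have := hb_mx hP1 ltac:(li); rewrite eQ (hb_mx hP2); li.
rewrite eb in eQ et.
apply/setP => x.
have ex := f_equal (fun S : {set U} => x \in S) eQ; rewrite /= !in_mk in ex.
rewrite -!inbE.
case: (eqVneq (nat_of_ord x) (mx P2)) => hx.
  case: (mx_in hP1) => z1 hz1 ez1; case: (mx_in hP2) => z2 hz2 ez2.
  apply/idP/idP => _; apply/inbP; [exists z2 | exists z1] => //; li.
case: (eqVneq (nat_of_ord x) (mx P2).-1) => hx'; first by rewrite hx'.
by move: ex; rewrite hx (negbTE hx') !andbT !orbF.
Qed.

Lemma pc_beta L : L < n -> pc L.+1 <= 2 * pc L /\ (0 < L -> pc L.+1 < 2 * pc L).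
Proof.
move=> hL.
have e2 : 2 * pc L = #|setX [set P | cov L P] [set: bool]|.
  by rewrite cardsX cardsT card_bool mulnC.
have hsub : [set hb x | x in [set P | cov L.+1 P]] \subset setX [set P | cov L P] [set: bool].
  apply/subsetP => Q /imsetP [P]; rewrite inE => hP ->.
  by rewrite !inE hb_cov.
rewrite /pc -(card_in_imset (@hb_inj L)) e2; split; first exact: subset_leq_card.
move=> hL0; apply: proper_card; apply/properP; split => //.
exists (itv 0 L, false); first by rewrite !inE cov_itv //; li.
apply/imsetP => [[P]]; rewrite inE => hc.
have hP : P != set0 by case/covP: hc => h _ _; apply/set0Pn; exists ord0.
have [_ eL] := @itv_mnmx 0 L ltac:(li).
rewrite /hb; case: eqP => e.
  by case=> eQ; move: eL; rewrite eQ mx1; li.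
case=> eQ et.
have eb : (mx P).-1 = L by rewrite -eL eQ hb_mx //; li.
case/covP: hc => _ _ h3.
have [x ex] : exists x : U, val x = L by apply: ord_of; li.
case: (h3 x ltac:(li)) => y hy hy'.
have : inb P (mx P).-1 by apply/inbP; exists y => //; li.
by rewrite -et.
Qed.

Definition fa (P : {set U}) : {set U} := mk (fun x => inb P x || (x == mx P + 1)).
Definition ga (L : nat) (P : {set U}) : {set U} :=
  if mx P == L then [set ord0] else mk (fun x => inb P x || (x == mx P + 2)).

Lemma mx_add (P : {set U}) a : mx P < a -> a <= n ->
  mx (mk (fun x => inb P x || (x == a))) = a.
Proof.
move=> h1 h2; apply: mx_char.
  move=> i; rewrite in_mk => /orP [/inB_bounds|/eqP ->]; li.
rewrite inb_mk eqxx orbT andbT; li.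
Qed.

Lemma rem_add (P : {set U}) a (x : U) : mx P < a ->
  (x \in P) = (x \in mk (fun x => inb P x || (x == a))) && (val x != a).
Proof.
move=> h; rewrite in_mk inbE; case hx: (x \in P) => /=.
  have := mx_ge hx => h2; apply/esym/negP => /eqP e; li.
by case: eqP.
Qed.

Lemma fa_cov L P : L.+2 <= n -> cov L.+1 P -> cov L.+2 (fa P).
Proof.
move=> hn hc; have := hc; case/covP => h1 h2 h3.
apply/covP; rewrite /fa mx_add //; try li; split.
- by rewrite in_mk inbE h1.
- li.
move=> x hx; case: (eqVneq (val x) (mx P + 1)) => hx'.
  exists x; rewrite ?in_mk ?hx' ?eqxx ?orbT //; li.
case: (h3 x ltac:(li)) => y hy hy'; exists y; first by rewrite in_mk inbE hy.
li.
Qed.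

Lemma ga_cov L P : L.+2 <= n -> cov L P -> cov L.+2 (ga L P).
Proof.
move=> hn hc; rewrite /ga; case: eqP => e; first exact: cov1.
have := hc; case/covP => h1 h2 h3.
have hP : P != set0 by apply/set0Pn; exists ord0.
apply/covP; rewrite mx_add //; try li; split.
- by rewrite in_mk inbE h1.
- li.
move=> x hx; case: (eqVneq (val x) (mx P + 2)) => hx'.
  exists x; rewrite ?in_mk ?hx' ?eqxx ?orbT //; li.
case: (eqVneq (val x) (mx P + 1)) => hx''.
  case: (mx_in hP) => z hz ez; exists z; first by rewrite in_mk inbE hz.
  li.
case: (h3 x ltac:(li)) => y hy hy'; exists y; first by rewrite in_mk inbE hy.
li.
Qed.

Lemma cov_mx L P : cov L P -> mx P <= L.
Proof. by case/covP. Qed.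

Lemma cov_ne L P : cov L P -> P != set0.
Proof. by case/covP => h _ _; apply/set0Pn; exists ord0. Qed.

Lemma fa_mx L P : L.+2 <= n -> cov L.+1 P -> mx (fa P) = mx P + 1.
Proof. move=> hn hc; rewrite /fa mx_add //; have := cov_mx hc; li. Qed.

Lemma ga_mx L P : L.+2 <= n -> cov L P -> mx P != L -> mx (ga L P) = mx P + 2.
Proof. move=> hn hc hL; rewrite /ga (negbTE hL) mx_add //; have := cov_mx hc; li. Qed.

Lemma fa_inj L : L.+2 <= n -> {in [set P | cov L.+1 P] &, injective fa}.
Proof.
move=> hn P1 P2; rewrite !inE => c1 c2 e.
have hm : mx P1 = mx P2 by have := fa_mx hn c1; rewrite e (fa_mx hn c2); li.
apply/setP => x.
rewrite (@rem_add P1 (mx P1 + 1)); last li.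
rewrite (@rem_add P2 (mx P2 + 1)); last li.
by rewrite /fa in e; rewrite e hm.
Qed.

Lemma ga_inj L : L.+2 <= n -> {in [set P | cov L P] &, injective (ga L)}.
Proof.
move=> hn P1 P2; rewrite !inE => c1 c2 e.
case: (eqVneq (mx P1) L) => h1; case: (eqVneq (mx P2) L) => h2.
- by rewrite (covL c1 h1) (covL c2 h2).
- have := ga_mx hn c2 h2; rewrite -e /ga h1 eqxx mx1; li.
- have := ga_mx hn c1 h1; rewrite e /ga h2 eqxx mx1; li.
have hm : mx P1 = mx P2 by have := ga_mx hn c1 h1; rewrite e (ga_mx hn c2 h2); li.
apply/setP => x.
rewrite (@rem_add P1 (mx P1 + 2)); last li.
rewrite (@rem_add P2 (mx P2 + 2)); last li.
by move: e; rewrite /ga (negbTE h1) (negbTE h2) => e; rewrite e hm.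
Qed.

Lemma fa_ga L P1 P2 : L.+2 <= n -> cov L.+1 P1 -> cov L P2 -> fa P1 != ga L P2.
Proof.
move=> hn c1 c2; apply/eqP => e.
have e1 := fa_mx hn c1.
case: (eqVneq (mx P2) L) => h2.
  by move: e1; rewrite e /ga h2 eqxx mx1; li.
have e2 := ga_mx hn c2 h2.
have hm : mx P1 = mx P2 + 1 by move: e1; rewrite e e2; li.
case: (mx_in (cov_ne c1)) => z hz ez.
have : inb (fa P1) (mx P1) by apply/inbP; exists z => //; rewrite in_mk inbE hz.
rewrite e /ga (negbTE h2) inb_mk hm => /andP [_ /orP [/inB_bounds|/eqP]]; li.
Qed.

Lemma pc_gamma L : L.+2 <= n -> pc L.+1 + pc L <= pc L.+2.
Proof.
move=> hn; rewrite /pc -(card_in_imset (fa_inj hn)) -(card_in_imset (ga_inj hn)).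
rewrite -cardsUI.
have -> : [set fa x | x in [set P | cov L.+1 P]] :&: [set ga L x | x in [set P | cov L P]] = set0.
  apply/setP => Q; rewrite !inE; apply/negP => /andP [/imsetP [P1 h1 ->] /imsetP [P2 h2 e]].
  move: h1 h2; rewrite !inE => h1 h2.
  by move: (fa_ga hn h1 h2); rewrite e eqxx.
rewrite cards0 addn0; apply: subset_leq_card; apply/subsetP => Q; rewrite inE.
case/orP => /imsetP [P]; rewrite inE => hP ->; rewrite inE.
  exact: fa_cov.
exact: ga_cov.
Qed.

Lemma kplus_itv : kplus n = itv 1 n.
Proof. apply/setP => x; rewrite inE in_itv; have := ltn_ord x; li. Qed.

Lemma set_main (hk : 1 <= n) (A : {set U}) : A != set0 ->
  ndiv A <= ndiv (kplus n) /\
  (n != 1 -> n != 3 -> ndiv A = ndiv (kplus n) -> A = kplus n).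
Proof.
move=> hA.
case: (mn_in hA) => a ha ea; have hmM : mn A <= mx A <= n.
  by rewrite -ea mx_ge // mx_len.
have e1 := itv_count hmM.
have e2 := @itv_count 1 n ltac:(li).
rewrite kplus_itv e2.
have hpinc : forall L, L < n -> pc L < pc L.+1 by move=> L hL; exact: pc_inc.
have hpb : forall L, L < n -> pc L.+1 <= 2 * pc L by move=> L hL; case: (pc_beta hL).
have hpbS : forall L, 0 < L -> L < n -> pc L.+1 < 2 * pc L by move=> L h0 hL; case: (pc_beta hL) => _; apply.
have [ar1 ar2] := @arith pc n hk pc0 pc_pos hpinc hpb hpbS pc_gamma (mn A) (mx A) hmM.
have e3 : (n - 1) = n.-1 by li.
rewrite e3.
have hr := red_le hA.
split; first by rewrite -e1 in ar1; li.
move=> h1 h3 eq.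
have eq2 : ndiv A = ndiv (itv (mn A) (mx A)).
  apply/eqP; rewrite eqn_leq hr /=; rewrite e1; li.
have hAJ : A = itv (mn A) (mx A).
  apply/eqP; apply/negPn/negP => hne; have := red_lt hA hne; li.
have : mn A = 1 /\ mx A = n.
  case: (ar2 ltac:(rewrite -e1; li)) => [//|[/eqP|/eqP]]; rewrite ?(negbTE h1) ?(negbTE h3) //.
case=> e4 e5; by rewrite {1}hAJ e4 e5.
Qed.

Definition bset (x : nat) : {set U} := mk (fun i => ldigit 2 x i == 1).
Definition num (B : {set U}) : nat := \sum_(t < n.+1) inb B t * 2 ^ t.

Lemma num_bit B i : ldigit 2 (num B) i = inb B i.
Proof. by rewrite /num ld_sum /inb andbA andbb. Qed.

Lemma num_lt B : num B < 2 ^ n.+1.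
Proof. exact: sum_lt. Qed.

Lemma bset_num B : bset (num B) = B.
Proof. by apply/setP => x; rewrite in_mk num_bit inbE; case: (x \in B). Qed.

Lemma inb_bset x t : inb (bset x) t = (t < n.+1) && (ldigit 2 x t == 1).
Proof. exact: inb_mk. Qed.

Lemma ld01 x t : (ldigit 2 x t == 1) = (ldigit 2 x t != 0).
Proof. by have := ld_lt2 x t; case: (ldigit 2 x t) => [|[|]]. Qed.

Section Lunar.
Variable N : nat.
Hypotheses (hN1 : 2 ^ n <= N) (hN2 : N < 2 ^ n.+1).

Lemma bitN_hi t : n < t -> ldigit 2 N t = 0.
Proof. by move=> h; apply: (ld_big hN2). Qed.

Lemma bitN_n : ldigit 2 N n = 1.
Proof.
rewrite /ldigit.
have h1 : 0 < N %/ 2 ^ n by rewrite divn_gt0 ?expn_gt0.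
have h2 : N %/ 2 ^ n < 2 by rewrite ltn_divLR ?expn_gt0 //; move: hN2; rewrite expnS mulnC.
by case: (N %/ 2 ^ n) h1 h2 => [|[|]].
Qed.

Lemma EE_N m q t : lunar_mul 2 m q = N -> EE m q t = (ldigit 2 N t == 1).
Proof.
move=> h; have := lunar_bit m q t; rewrite h => ->.
by case: (EE m q t).
Qed.

Lemma EE_intro x y i j : ldigit 2 x i = 1 -> ldigit 2 y j = 1 -> EE x y (i + j).
Proof.
move=> h1 h2; apply/existsP; exists (Ordinal (leq_addr j i.+1 : i < (i + j).+1)) => /=.
by rewrite h1 addKn h2.
Qed.

Lemma mq_hi m q : lunar_mul 2 m q = N ->
  (forall i, n < i -> ldigit 2 m i = 0) /\ (forall i, n < i -> ldigit 2 q i = 0).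
Proof.
move=> h.
have : EE m q n by rewrite (EE_N _ h) bitN_n.
case/existsP => i0 /andP [/eqP hi0 /eqP hj0].
split => i hi.
  have := ld_lt2 m i; case hb: (ldigit 2 m i) => [|[|]] //= _.
  have := EE_intro hb hj0; rewrite (EE_N _ h) bitN_hi //; lia.
have := ld_lt2 q i; case hb: (ldigit 2 q i) => [|[|]] //= _.
have := EE_intro hi0 hb; rewrite (EE_N _ h) bitN_hi //; lia.
Qed.

Lemma lunar_count : lunar_ndiv 2 N = ndiv (bset N).
Proof.
rewrite /lunar_ndiv ndivE.
set S1 := [set m : 'I_(2 ^ N) | _].
have inj : {in S1 &, injective (fun m : 'I_(2 ^ N) => bset m)}.
  move=> m1 m2; rewrite !inE => /andP [_ /existsP [q1 /eqP h1]] /andP [_ /existsP [q2 /eqP h2]] e.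
  apply/val_inj/ld_ext => i; case: (leqP i n) => hi.
    have := f_equal (fun S => inb S i) e; rewrite /= !inb_bset ltnS hi /=.
    have := ld_lt2 m1 i; have := ld_lt2 m2 i.
    by case: (ldigit 2 m1 i) => [|[|]]; case: (ldigit 2 m2 i) => [|[|]].
  by rewrite (proj1 (mq_hi h1)) // (proj1 (mq_hi h2)).
rewrite -(card_in_imset inj); apply: eq_card => B; rewrite [in RHS]inE.
apply/imsetP/idP.
  case=> m; rewrite inE => /andP [hm /existsP [q /eqP h]] ->.
  apply/existsP; exists (bset q); apply: sumset_intro.
    move=> b d; rewrite !in_mk => /eqP hb /eqP hd.
    have := EE_intro hb hd; rewrite (EE_N _ h) => hN.
    rewrite inb_bset hN andbT; case: (leqP (b + d) n) => // hlt.
    by move: hN; rewrite bitN_hi.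
  move=> c; rewrite in_mk -(EE_N _ h) => /existsP [i /andP [hi1 hi2]].
  have hc := ltn_ord c; have hi := ltn_ord i.
  have [b eb] : exists b : U, val b = i by apply: ord_of; li.
  have [d ed] : exists d : U, val d = c - i by apply: ord_of; li.
  exists b, d; split.
  - by rewrite in_mk eb.
  - by rewrite in_mk ed.
  - li.
case/existsP => D hs.
have hnN : n.+1 <= N by have := ltn_expl n (isT : 1 < 2); li.
have hle : 2 ^ n.+1 <= 2 ^ N by rewrite leq_exp2l.
have hm : num B < 2 ^ N by apply: leq_trans (num_lt B) hle.
have hq : num D < 2 ^ N by apply: leq_trans (num_lt D) hle.
have hN0 : bset N != set0.
  apply/set0Pn; exists ord_max; by rewrite in_mk /= bitN_n.
case: (div_facts hN0 hs) => hB _ _ _ hsum.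
exists (Ordinal hm); last by rewrite /= bset_num.
rewrite inE /=; apply/andP; split.
  case/set0Pn: hB => b hb; have := num_bit B b; rewrite inbE hb.
  by case: (num B) => //; rewrite /ldigit div0n mod0n.
apply/existsP; exists (Ordinal hq); apply/eqP; apply: ld_ext => t /=.
rewrite lunar_bit.
have hEE : EE (num B) (num D) t = [exists i : 'I_t.+1, inb B i && inb D (t - i)].
  by apply: eq_existsb => i; rewrite !num_bit; case: (inb B i); case: (inb D _).
rewrite hEE.
case hNt: (ldigit 2 N t == 1).
  have ht : t <= n by case: (leqP t n) => // h'; move: hNt; rewrite bitN_hi.
  have [c ec] : exists c : U, val c = t by apply: ord_of.
  have : c \in bset N by rewrite in_mk ec hNt.
  case/(sumset_dec hs) => b [d [hb hd e]].
  rewrite (eqP hNt); case: existsP => // [[]].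
  have hbt : b < t.+1 by li.
  exists (Ordinal hbt) => /=; rewrite !inbE hb /=.
  have -> : t - b = d by li.
  by rewrite inbE.
have -> : ldigit 2 N t = 0 by have := ld_lt2 N t; move: hNt; case: (ldigit 2 N t) => [|[|]].
case: existsP => // [[i /andP [/inbP [y1 hy1 e1] /inbP [y2 hy2 e2]]]].
have := hsum _ _ hy1 hy2; rewrite inb_bset.
have -> : y1 + y2 = t by have := ltn_ord i; li.
by rewrite hNt andbF.
Qed.

End Lunar.

Lemma pow_m2 : 2 ^ n.+1 - 2 = \sum_(t < n.+1) (0 < t) * 2 ^ t.
Proof.
elim: n => [|k IH]; first by rewrite big_ord1.
rewrite big_ord_recr /=.
have -> : \sum_(i < k.+1) (0 < widen_ord (leqnSn k.+1) i) * 2 ^ (widen_ord (leqnSn k.+1) i) = \sum_(t < k.+1) (0 < t) * 2 ^ t by apply: eq_bigr.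
rewrite -IH mul1n (expnS 2 k.+1).
move: (expn_gt0 2 k); rewrite expnS. set a := 2 ^ k. lia.
Qed.

Lemma bset_kplus : bset (2 ^ n.+1 - 2) = kplus n.
Proof.
apply/setP => x; rewrite in_mk inE pow_m2.
rewrite (ld_sum (fun t => 0 < t)) ltn_ord /=.
by case: (0 < x).
Qed.

End SetPart.

Theorem mainTheorem2 (k : nat) (hk : 1 <= k) :
  (forall A : {set 'I_k.+1}, A != set0 -> ndiv A <= ndiv (kplus k)) /\
  (k != 1 -> k != 3 -> forall A : {set 'I_k.+1},
     A != set0 -> ndiv A = ndiv (kplus k) -> A = kplus k) /\
  (* lunar form, for (k+1)-digit binary numbers *)
  (forall n : nat, 2 ^ k <= n < 2 ^ k.+1 ->
     lunar_ndiv 2 n <= lunar_ndiv 2 (2 ^ k.+1 - 2)) /\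
  (k.+1 != 2 -> k.+1 != 4 -> forall n : nat, 2 ^ k <= n < 2 ^ k.+1 ->
     lunar_ndiv 2 n = lunar_ndiv 2 (2 ^ k.+1 - 2) -> n = 2 ^ k.+1 - 2).
Proof.
have hr1 : 2 ^ k <= 2 ^ k.+1 - 2.
  rewrite expnS; have : 2 ^ 1 <= 2 ^ k by rewrite leq_exp2l.
  set a := 2 ^ k; rewrite expn1; lia.
have hr2 : 2 ^ k.+1 - 2 < 2 ^ k.+1 by rewrite expnS; move: (expn_gt0 2 k); set a := 2 ^ k; lia.
have hne : forall N, 2 ^ k <= N -> N < 2 ^ k.+1 -> bset k N != set0.
  move=> N h1 h2; apply/set0Pn; exists ord_max; by rewrite in_mk /= bitN_n.
have eK := @lunar_count k (2 ^ k.+1 - 2) hr1 hr2; rewrite bset_kplus in eK.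
split; first by move=> A hA; case: (set_main hk hA).
split; first by move=> h1 h3 A hA; case: (set_main hk hA) => _; apply.
split.
  move=> N /andP [h1 h2]; rewrite eK (lunar_count h1 h2).
  by case: (set_main hk (hne N h1 h2)).
move=> h2 h4 N /andP [hN1 hN2]; rewrite eK (lunar_count hN1 hN2) => e.
have h1' : k != 1 by apply: contra h2 => /eqP ->.
have h3' : k != 3 by apply: contra h4 => /eqP ->.
have eB := (set_main hk (hne N hN1 hN2)).2 h1' h3' e.
rewrite -bset_kplus in eB.
apply: ld_ext => i; case: (leqP i k) => hi.
  have := f_equal (fun S => inb S i) eB; rewrite /= !inb_bset ltnS hi /= !ld01.
  have := ld_lt2 N i; have := ld_lt2 (2 ^ k.+1 - 2) i.
  by case: (ldigit 2 N i) => [|[|]]; case: (ldigit 2 _ i) => [|[|]].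
by rewrite (ld_big hN2) // (ld_big hr2).
Qed.
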